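(* Let $a,b\geq 1$ and $m,n,p,q>1$ be integers. The graph $aH_{m,p}\circ bH_{n,q}$ is distance magic if and only if $n\equiv 0\pmod 2$ or $mnabpq\equiv 1\pmod 2$.
   Context: A graph $G$ on $v$ vertices is distance magic if there is a bijection $f:V(G)\to\{1,\ldots,v\}$ and a constant $k$ such that for every vertex $x$, $\sum_{y\in N(x)}f(y)=k$, where $N(x)$ is the set of neighbours of $x$. $H_{n,p}$ denotes the complete multipartite graph with $p$ partite sets each of size $n$; $aH$ denotes the disjoint union of $a$ copies of $H$. The lexicographic product $G\circ H$ has vertex set $V(G)\times V(H)$, with $(g,h)$ adjacent to $(g',h')$ iff either $gg'\in E(G)$, or $g=g'$ and $hh'\in E(H)$. *)

(* Defs.v *)
From mathcomp Require Import all_boot.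
Set Implicit Arguments. Unset Strict Implicit. Unset Printing Implicit Defensive.

(* Distance magic: a bijection f : V -> {1,...,v} (encoded as a bijection
   onto 'I_v followed by +1) with constant neighbourhood label sums. *)
Definition distance_magic (T : finType) (e : rel T) : Prop :=
  exists f : T -> 'I_#|T|, bijective f /\
    exists k : nat, forall x : T, \sum_(y | e x y) (f y).+1 = k.

(* H_{n,p}: complete multipartite graph with p parts of size n.
   Vertex (i, j) = j-th vertex of part i; adjacent iff in different parts. *)
Definition Hvert (n p : nat) : finType := ('I_p * 'I_n)%type.
Definition Hrel (n p : nat) : rel (Hvert n p) := fun u v => u.1 != v.1.

Definition copies_rel (a : nat) (T : finType) (e : rel T) : rel ('I_a * T)%type :=
  fun u v => (u.1 == v.1) && e u.2 v.2.

Definition lex_rel (T1 T2 : finType) (e1 : rel T1) (e2 : rel T2)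
  : rel (T1 * T2)%type :=
  fun u v => e1 u.1 v.1 || ((u.1 == v.1) && e2 u.2 v.2).
Arguments copies_rel a {T} e.
Arguments Hrel n p : clear implicits.

(* Main.v *)
Require Import Defs.
From mathcomp Require Import all_boot.
From mathcomp Require Import zify.
Set Implicit Arguments. Unset Strict Implicit. Unset Printing Implicit Defensive.

Lemma sum_fst (X Y : finType) (x0 : X) (Q : pred Y) (phi : X * Y -> nat) :
  \sum_(y : X * Y | (x0 == y.1) && Q y.2) phi y = \sum_(z | Q z) phi (x0, z).
Proof.
rewrite -(@big_pred1_eq nat 0 addn X x0 (fun x => \sum_(z | Q z) phi (x, z))).
rewrite pair_big_dep /=; apply: eq_big => [[u v]|[u v]] //=.
by rewrite eq_sym.
Qed.

Lemma sum_pair (X Y : finType) (phi : X * Y -> nat) :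
  \sum_(y : X * Y) phi y = \sum_(x : X) \sum_(z : Y) phi (x, z).
Proof. by rewrite pair_big; apply: eq_bigr => [[u v]]. Qed.

Lemma copies_sum (a m p : nat) (phi : 'I_a * ('I_p * 'I_m) -> nat) x :
  \sum_(y | copies_rel a (Hrel m p) x y) phi y +
  \sum_(y | (x.1 == y.1) && (x.2.1 == y.2.1)) phi y =
  \sum_(y | x.1 == y.1) phi y.
Proof.
rewrite (bigID (fun y => x.2.1 == y.2.1) (fun y => x.1 == y.1)) addnC.
congr (_ + _); apply: eq_bigl => y //.
Qed.

Lemma lex_sum (T1 T2 : finType) (e1 : rel T1) (e2 : rel T2) (F : T1 * T2 -> nat) x :
  irreflexive e1 ->
  \sum_(y | lex_rel e1 e2 x y) F y =
  \sum_(y1 | e1 x.1 y1) \sum_(y2 : T2) F (y1, y2) +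
  \sum_(y2 | e2 x.2 y2) F (x.1, y2).
Proof.
move=> irr.
rewrite (bigID (fun y => e1 x.1 y.1)) /=.
congr (_ + _).
  rewrite pair_big_dep /=. apply: eq_big => [[u v]|[u v]] /=.
  - by rewrite /lex_rel /= andbT; apply/idP/idP => [/andP[]|->].
  - by [].
rewrite -(sum_fst x.1 (e2 x.2) F); apply: eq_bigl => [[u v]] /=.
rewrite /lex_rel /=; case: (x.1 =P u) => [<-|_]; first by rewrite irr /= andbT.
by rewrite /= orbF andbN.
Qed.

Definition tau (t j k : nat) := if odd j then t.-1 - k else k.

Lemma sum_tau t g k : k < t -> \sum_(0 <= j < 2 * g) tau t j k = g * t.-1.
Proof.
move=> kt; elim: g => [|g IH]; first by rewrite big_geq.
rewrite (_ : 2 * g.+1 = (2 * g).+1.+1) ?mulnS // !big_nat_recr //= IH /tau /=.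
rewrite oddM /=; lia.
Qed.

Definition sig_odd (h j k : nat) :=
  if j == 0 then k else if j == 1 then (if k <= h then k + h else k - h - 1)
  else if j == 2 then (if k <= h then 2 * h - 2 * k else 4 * h + 1 - 2 * k)
  else tau (2 * h + 1) (j - 3) k.

Lemma matrix_exists n t : 0 < t -> 1 < n -> (~~ odd n || odd t) ->
  exists s : nat -> nat -> nat,
    (forall j k, k < t -> s j k < t) /\
    (forall j k k', k < t -> k' < t -> s j k = s j k' -> k = k') /\
    exists c, forall k, k < t -> \sum_(j < n) s j k = c.
Proof.
move=> t0 n1; case/orP => [nev|todd].
  exists (tau t); split; [|split].
  - by move=> j k kt; rewrite /tau; case: odd; lia.
  - by move=> j k k' kt k't; rewrite /tau; case: odd; lia.
  exists (n./2 * t.-1) => k kt.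
  have -> : n = 2 * n./2 by move: (odd_double_half n); rewrite (negbTE nev) -mul2n /=.
  by rewrite -(big_mkord xpredT (fun j => tau t j k)) sum_tau // mul2n doubleK.
have th : t = 2 * t./2 + 1 by move: (odd_double_half t); rewrite todd -mul2n; lia.
set h := t./2 in th *.
case/boolP: (odd n) => nod; last first.
  exists (tau t); split; [|split].
  - by move=> j k kt; rewrite /tau; case: odd; lia.
  - by move=> j k k' kt k't; rewrite /tau; case: odd; lia.
  exists (n./2 * t.-1) => k kt.
  have -> : n = 2 * n./2 by move: (odd_double_half n); rewrite (negbTE nod) -mul2n /=.
  by rewrite -(big_mkord xpredT (fun j => tau t j k)) sum_tau // mul2n doubleK.
have [g nh] : exists g, n = 3 + 2 * g.
  by exists (n./2).-1; move: (odd_double_half n); rewrite nod -mul2n; lia.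
exists (sig_odd h); split; [|split].
- move=> j k kt; rewrite /sig_odd /tau; case: (j =P 0) => _;
    [|case: (j =P 1) => _; [|case: (j =P 2) => _; [|case: odd]]]; try case: (leqP k h); lia.
- move=> j k k' kt k't; rewrite /sig_odd /tau; case: (j =P 0) => _;
    [|case: (j =P 1) => _; [|case: (j =P 2) => _; [|case: odd]]];
   try case: (leqP k h); try case: (leqP k' h); lia.
exists (3 * h + g * t.-1) => k kt.
rewrite -(big_mkord xpredT (fun j => sig_odd h j k)) nh.
rewrite (big_cat_nat _ (leq_addr _ 3)) //= (big_addn 0 _ 3).
rewrite (_ : 3 + 2 * g - 3 = 2 * g); last lia.
rewrite (eq_bigr (fun j => tau t j k) (P := xpredT) (F1 := fun i => sig_odd h (i + 3) k)); last first.
  move=> j _; rewrite /sig_odd (_ : j + 3 - 3 = j); last lia.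
  rewrite -th; case: (j + 3 =P 0) => [|_]; first lia.
  case: (j + 3 =P 1) => [|_]; first lia.
  by case: (j + 3 =P 2) => [|_]; first lia.
rewrite sum_tau // !big_nat_recr //= big_geq // /sig_odd /=.
case: leqP; lia.
Qed.

Lemma sum_cst n c : \sum_(i < n) c = n * c.
Proof. by rewrite big_const_ord iter_addn_0 mulnC. Qed.

Lemma sum_const_cond (I : finType) (P : pred I) c :
  \sum_(i | P i) c = (\sum_(i | P i) 1) * c.
Proof. by rewrite big_distrl /=; apply: eq_bigr => i _; rewrite mul1n. Qed.

Section H.
Variables (b q n : nat).
Implicit Type phi : 'I_b * ('I_q * 'I_n) -> nat.

Lemma part_sum phi c i :
  \sum_(y | (c == y.1) && (i == y.2.1)) phi y = \sum_(j : 'I_n) phi (c, (i, j)).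
Proof.
rewrite (sum_fst c (fun z : 'I_q * 'I_n => i == z.1)).
rewrite (eq_bigl (fun z : 'I_q * 'I_n => (i == z.1) && xpredT z.2)).
  by rewrite (sum_fst i xpredT (fun z => phi (c, z))).
by move=> z; rewrite andbT.
Qed.

Lemma cop_sum phi c :
  \sum_(y | c == y.1) phi y = \sum_(i : 'I_q) \sum_(j : 'I_n) phi (c, (i, j)).
Proof.
rewrite (eq_bigl (fun y : 'I_b * ('I_q * 'I_n) => (c == y.1) && xpredT y.2)).
  by rewrite (sum_fst c xpredT phi) sum_pair.
by move=> y; rewrite andbT.
Qed.

Lemma all_sum phi :
  \sum_y phi y = \sum_(c : 'I_b) \sum_(i : 'I_q) \sum_(j : 'I_n) phi (c, (i, j)).
Proof. by rewrite sum_pair; apply: eq_bigr => c _; rewrite sum_pair. Qed.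

Lemma copies_irr : irreflexive (copies_rel b (Hrel n q)).
Proof. by move=> x; rewrite /copies_rel /Hrel eqxx /= eqxx. Qed.

End H.

Lemma suff (a b m n p q : nat) :
  1 <= a -> 1 <= b -> 1 < m -> 1 < n -> 1 < p -> 1 < q ->
  (~~ odd n || odd (a * (p * m) * (b * q))) ->
  distance_magic
     (lex_rel (copies_rel a (Hrel m p)) (copies_rel b (Hrel n q))).
Proof.
move=> a1 b1 m1 n1 p1 q1 cond.
pose U : finType := (('I_a * Hvert m p) * ('I_b * 'I_q))%type.
have cU : #|U| = a * (p * m) * (b * q) by rewrite /U /Hvert !card_prod !card_ord.
have t0 : 0 < #|U| by rewrite cU !muln_gt0 a1 b1 (ltnW m1) (ltnW p1) (ltnW q1).
have [s [sb [sinj [c0 sc]]]] := matrix_exists t0 n1 (eq_ind_r (fun z => ~~ odd n || odd z) cond cU).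
pose T : finType := (('I_a * Hvert m p) * ('I_b * Hvert n q))%type.
pose pr (x : T) : U := (x.1, (x.2.1, x.2.2.1)).
pose lab (x : T) := x.2.2.2 * #|U| + s x.2.2.2 (enum_rank (pr x)).
have cT : #|T| = n * #|U| by rewrite cU /T /Hvert !card_prod !card_ord; lia.
have labl : forall x, lab x < #|T|.
  move=> x; rewrite cT /lab.
  have := sb x.2.2.2 _ (ltn_ord (enum_rank (pr x))).
  have := ltn_ord x.2.2.2; nia.
pose f (x : T) : 'I_#|T| := Ordinal (labl x).
exists f; split.
  apply: inj_card_bij; last by rewrite card_ord.
  move=> x y /(congr1 val) /= E.
  have Ej : x.2.2.2 = y.2.2.2 :> nat.
    by have := congr1 (divn^~ #|U|) E; rewrite /lab !divnMDl // !divn_small ?addn0 ?sb.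
  have Es : s x.2.2.2 (enum_rank (pr x)) = s y.2.2.2 (enum_rank (pr y)).
    by move: E; rewrite /lab Ej => /addnI.
  rewrite Ej in Es; have Ep := enum_rank_inj (val_inj (sinj _ _ _ (ltn_ord _) (ltn_ord _) Es)).
  move: x y Ej Ep {E Es} => [x1 [x2 [x3 x4]]] [y1 [y2 [y3 y4]]] /= /val_inj -> [-> -> ->] //.
pose K0 := \sum_(j < n) (j * #|U|).+1 + c0.
have partK : forall g c i, \sum_(j : 'I_n) (lab (g, (c, (i, j)))).+1 = K0.
  move=> g c i; rewrite /lab /=.
  rewrite (eq_bigr (fun j : 'I_n => (j * #|U|).+1 + s j (enum_rank (pr (g, (c, (i, j))))))) //.
  rewrite big_split /= /K0; congr (_ + _); rewrite -(sc (enum_rank ((g, (c, i)) : U))) //.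
exists ((p * m - m) * (b * (q * K0)) + (q * K0 - K0)) => x.
rewrite (eq_bigr (fun y => (lab y).+1)) // lex_sum; last exact: copies_irr.
rewrite (eq_bigr (fun _ => b * (q * K0))); last first.
  move=> y1 _; rewrite all_sum (eq_bigr (fun _ => q * K0)) ?sum_cst // => c _.
  by rewrite (eq_bigr (fun _ => K0)) ?sum_cst // => i _; apply: partK.
rewrite sum_const_cond.
have W1 := copies_sum (fun _ => 1) x.1.
rewrite part_sum cop_sum !big_const_ord !iter_addn_0 in W1.
have W2 := copies_sum (fun y2 => (lab (x.1, y2)).+1) x.2.
rewrite part_sum cop_sum in W2.
rewrite partK (eq_bigr (fun _ => K0) (fun i _ => partK x.1 x.2.1 i)) in W2.
rewrite big_const_ord iter_addn_0 in W2.
set S1 := \sum_(i | copies_rel a (Hrel m p) x.1 i) 1 in W1 *. set S2 := \sum_(y | copies_rel b (Hrel n q) x.2 y) (lab (x.1, y)).+1 in W2 *.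
have -> : S1 = p * m - m by lia.
have -> : S2 = q * K0 - K0 by lia.
by [].
Qed.

Lemma lin_uniq k A X Y P P' : X != Y -> k + X*P = A + Y*P -> k + X*P' = A + Y*P' -> P = P'.
Proof. move=> /eqP XY E1 E2. nia. Qed.
Lemma tri N : (\sum_(i < N) i.+1) * 2 = N * N.+1.
Proof. elim: N => [|N IH]; first by rewrite big_ord0. rewrite big_ord_recr /= mulnDl IH. lia. Qed.

Lemma nec (a b m n p q : nat) :
  1 <= a -> 1 <= b -> 1 < m -> 1 < n -> 1 < p -> 1 < q ->
  distance_magic
     (lex_rel (copies_rel a (Hrel m p)) (copies_rel b (Hrel n q))) ->
  odd n -> odd (a * (p * m) * (b * q) * n).
Proof.
move=> a1 b1 m1 n1 p1 q1 [f [fbij [k hk]]] nodd.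
pose F y := (f y).+1.
pose e1 := copies_rel a (Hrel m p).
pose Part (g : 'I_a * Hvert m p) (c : 'I_b) (i : 'I_q) := \sum_(j : 'I_n) F (g, (c, (i, j))).
pose A1 (g : 'I_a * Hvert m p) := \sum_(y1 | e1 g y1) \sum_(y2 : 'I_b * Hvert n q) F (y1, y2).
have j0 : 'I_n by exists 0; lia.
have i0 : 'I_q by exists 0; lia.
have c0 : 'I_b by exists 0; lia.
have E1 : forall g c i, k + Part g c i = A1 g + \sum_(i' : 'I_q) Part g c i'.
  move=> g c i; rewrite -(hk (g, (c, (i, j0)))) lex_sum; last exact: copies_irr.
  have W2 := copies_sum (fun y2 => F (g, y2)) (c, (i, j0)).
  rewrite part_sum cop_sum /= in W2.
  by rewrite /A1 /Part /= -W2 /F /e1 addnA.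
have Es : forall g c, \sum_(i' : 'I_q) Part g c i' = q * Part g c i0.
  move=> g c; rewrite (eq_bigr (fun _ => Part g c i0)) ?sum_cst // => i _.
  by have := E1 g c i; have := E1 g c i0; lia.
pose Pg g := Part g c0 i0.
have PE : forall g c i, Part g c i = Pg g.
  move=> g c i; have -> : Part g c i = Part g c i0.
    by have := E1 g c i; have := E1 g c i0; lia.
  apply: (@lin_uniq k (A1 g) 1 q); first by apply/eqP; lia.
    by rewrite mul1n -Es; exact: E1.
  by rewrite mul1n -Es; exact: E1.
have Sg : forall g, \sum_(y2 : 'I_b * Hvert n q) F (g, y2) = b * (q * Pg g).
  move=> g; have := all_sum (fun y2 : 'I_b * Hvert n q => F (g, y2)); rewrite /= => ->.
  rewrite (eq_bigr (fun _ => q * Pg g)) ?sum_cst // => c _.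
  rewrite (eq_bigr (fun _ => Pg g)) ?sum_cst // => i _.
  exact: PE.
pose W g := \sum_(y1 | e1 g y1) Pg y1.
have EA : forall g, k + Pg g = b * (q * W g) + q * Pg g.
  move=> g; have := E1 g c0 i0; rewrite Es -/(Pg g) => ->; congr (_ + _).
  rewrite /A1 /W big_distrr big_distrr /=; apply: eq_bigr => y1 _.
  by rewrite Sg mulnA.
have CW : forall g, W g + \sum_(s : 'I_m) Pg (g.1, (g.2.1, s)) =
    \sum_(r : 'I_p) \sum_(s : 'I_m) Pg (g.1, (r, s)).
  move=> g; have := copies_sum Pg g; rewrite part_sum cop_sum => <-.
  by [].
have s0 : 'I_m by exists 0; lia.
have r0 : 'I_p by exists 0; lia.
have d0 : 'I_a by exists 0; lia.
have E5 : forall d r s, Pg (d, (r, s)) = Pg (d, (r, s0)).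
  move=> d r s; have EW : W (d, (r, s)) = W (d, (r, s0)).
    by have := CW (d, (r, s)); have := CW (d, (r, s0)); rewrite /=; lia.
  apply: (@lin_uniq k (b * (q * W (d, (r, s0)))) 1 q); first by apply/eqP; lia.
    by rewrite mul1n -EW; exact: EA.
  by rewrite mul1n; exact: EA.
pose Q d r := Pg (d, (r, s0)).
pose Cop1 d := \sum_(r : 'I_p) \sum_(s : 'I_m) Pg (d, (r, s)).
have E6eq : forall d r, k + (1 + b * q * m) * Q d r = b * q * Cop1 d + q * Q d r.
  move=> d r; have := CW (d, (r, s0)); have := EA (d, (r, s0)).
  rewrite /= (eq_bigr (fun _ => Q d r)) ?sum_cst; last by move=> s _; apply: E5.
  rewrite -/(Cop1 d) -/(Q d r); nia.
have E6 : forall d r, Q d r = Q d r0.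
  move=> d r; apply: (@lin_uniq k (b * q * Cop1 d) (1 + b * q * m) q); last exact: E6eq.
    have h1 : 1 * q * 2 <= b * q * m by rewrite leq_mul // leq_mul.
    by apply/eqP; lia.
  exact: E6eq.
pose R d := Q d r0.
have E7eq : forall d, k + (1 + b * q * m) * R d = 0 + (b * q * p * m + q) * R d.
  move=> d; have := E6eq d r0; rewrite -/(R d).
  have -> : Cop1 d = p * (m * R d).
    rewrite /Cop1 (eq_bigr (fun _ => m * R d)) ?sum_cst // => r _.
    rewrite (eq_bigr (fun _ => R d)) ?sum_cst // => s _.
    by rewrite E5 -/(Q d r) E6.
  nia.
have PgE : forall g, Pg g = R d0.
  move=> [d [r s]]; rewrite E5 -/(Q d r) E6 -/(R d).
  apply: (@lin_uniq k 0 (1 + b * q * m) (b * q * p * m + q)); last exact: E7eq.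
    have h1 : 1 * q * 2 <= b * q * m by rewrite leq_mul // leq_mul.
    have h2 : b * q * 2 * m <= b * q * p * m by rewrite leq_mul // leq_mul.
    by apply/eqP; lia.
  exact: E7eq.
pose T : finType := (('I_a * Hvert m p) * ('I_b * Hvert n q))%type.
have tot1 : \sum_(y : T) F y = a * (p * (m * (b * (q * R d0)))).
  rewrite sum_pair (eq_bigr (fun _ => b * (q * R d0))); last by move=> g _; rewrite Sg PgE.
  have := all_sum (fun _ : 'I_a * Hvert m p => b * (q * R d0)); rewrite /= => ->.
  by rewrite !(big_const_ord, iter_addn_0) mulnC; congr (_ * _); rewrite mulnC; congr (_ * _); rewrite mulnC.
have tot2 : \sum_(i : 'I_#|T|) i.+1 = \sum_(y : T) F y.
  by rewrite (reindex f) //; apply: onW_bij.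
have cT : #|T| = a * (p * m) * (b * q) * n by rewrite /T /Hvert !card_prod !card_ord; lia.
have := tri #|T|; rewrite tot2 tot1 cT.
set t := a * (p * m) * (b * q).
have tp : 0 < t by rewrite /t !muln_gt0 a1 b1 (ltnW m1) (ltnW p1) (ltnW q1).
move=> E.
have E' : t * (R d0 * 2) = t * (n * (t * n).+1).
  rewrite /t; move: E; rewrite /t; nia.
move/eqP: E'; rewrite eqn_pmul2l // => /eqP /(congr1 odd).
rewrite oddM /= oddM nodd /= andbF /=.
by case: (odd (t * n)).
Qed.

Theorem theorem13 (a b m n p q : nat) :
  1 <= a -> 1 <= b -> 1 < m -> 1 < n -> 1 < p -> 1 < q ->
  (distance_magic
     (lex_rel (copies_rel a (Hrel m p)) (copies_rel b (Hrel n q)))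
   <-> (n = 0 %[mod 2] \/ m * n * a * b * p * q = 1 %[mod 2])).
Proof.
move=> a1 b1 m1 n1 p1 q1; split.
- move=> dm; case/boolP: (odd n) => no.
    right; have := nec a1 b1 m1 n1 p1 q1 dm no.
    rewrite !modn2 !oddM.
    by case: (odd a); case: (odd b); case: (odd m); case: (odd n); case: (odd p); case: (odd q).
  by left; rewrite !modn2 (negbTE no).
- move=> H; apply: suff => //; case: H; rewrite !modn2.
    by case: (odd n).
  rewrite !oddM.
  by case: (odd a); case: (odd b); case: (odd m); case: (odd n); case: (odd p); case: (odd q).
Qed.
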